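(* Consider the weighted age-of-job scheduling problem described below, in which the service (job-completion) time of every network $i\in\{1,\dots,N\}$ is geometric with success probability $q_i$. This scheduling problem is indexable: for every network $i$ and every user $j\in\mathcal{M}_i$, the passive set $\mathcal{P}_j^i(\bar\lambda_i)$ of the single-user problem is monotonically non-decreasing in the activation cost $\bar\lambda_i$ (i.e., $\bar\lambda_{i,1}\le\bar\lambda_{i,2}$ implies $\mathcal{P}_j^i(\bar\lambda_{i,1})\subseteq\mathcal{P}_j^i(\bar\lambda_{i,2})$), and $\mathcal{P}_j^i(\infty)=\mathcal{S}_j^i$.
   Context: Time-slotted system: a central server, $N$ task-specific machine networks, and user groups $\mathcal{M}_i$ ($i=1,\dots,N$). In each slot, user $j\in\mathcal{M}_i$ generates a job with probability $p_j^i>0$; the server keeps a unit-size buffer per (user, group) pair, and arrivals to a full buffer are dropped. Network $i$ can serve at most $\bar M_i$ jobs per slot and the server at most $\bar M$ jobs per slot in total; preemptive-resume service is allowed. The age of job $\Delta_j^i(t)$ is the time the current job of user $j\in\mathcal{M}_i$ has spent in the buffer up to time $t$ (0 if no job). The objective is to minimize the long-term average of $\sum_i\sum_j w_j^i\Delta_j^i(t)$ subject to the per-slot capacity constraints. Relaxing the constraints to time-average constraints with Lagrange multipliers $\lambda,\mu_i\ge0$ decouples the problem into single-user problems: minimize $\limsup_{T\to\infty}\frac1T\sum_{t=1}^T\mathbb{E}[w_j^i\Delta_j^i(t)+\bar\lambda_i c_j^i(t)]$, with $\bar\lambda_i=\lambda+\mu_i$ and $c_j^i(t)\in\{0,1\}$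 the action (1 = active/serve, 0 = passive). Network $i$ completes an in-service job at the end of each slot with probability $q_i$ (geometric service), so the state is $s_j^i=(\Delta_j^i,\bar\Delta_j^i)$ with $\bar\Delta_j^i=0$ if a job is present and $\bar\Delta_j^i=\infty$ if the buffer is empty (state $(0,\infty)$); $\mathcal{S}_j^i$ is the state space. Per-slot cost is $w_j^i\Delta_j^i+\bar\lambda_i c_j^i$; only the passive action is allowed in the empty state. Transitions: from $(0,\infty)$, stay w.p. $1-p_j^i$ or go to $(0,0)$ w.p. $p_j^i$; passive with a job: $(\Delta,0)\to(\Delta+1,0)$; active with a job: to $(0,0)$ w.p. $q_ip_j^i$, to $(0,\infty)$ w.p. $q_i(1-p_j^i)$, to $(\Delta+1,0)$ w.p. $1-q_i$. With $\bar V_j^i(s;c,\bar\lambda_i)$ the cost of action $c$ in state $s$ plus the expected relative value (average-cost optimality) of the next state, the passive set is $\mathcal{P}_j^i(\bar\lambda_i)=\{s\in\mathcal{S}_j^i:\bar\Delta_j^i=0,\ \bar V_j^i(s;0,\bar\lambda_i)\le\bar V_j^i(s;1,\bar\lambda_i)\}\cup\{s\in\mathcal{S}_j^i:\bar\Delta_j^i=\infty\}$. A user is indexable if its passive set is monotone in $\bar\lambda_i$ with $\mathcal{P}_j^i(\infty)=\mathcal{S}_j^i$; the scheduling problem is indexable if every user of every network is indexable. *)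

(* Defs.v *)
From Stdlib Require Import Reals Lra.
Open Scope R_scope.

(** Single-user state space S_j^i.
    None      = the empty-buffer state (0, infinity);
    Some d    = the state (d, 0): a job of age d is in the buffer. *)
Definition state := option nat.

Definition Vbar (w p q lam : R) (h : state -> R) (d : nat) (c : bool) : R :=
  if c then
    w * INR d + lam
    + (q * p * h (Some 0%nat) + q * (1 - p) * h None + (1 - q) * h (Some (S d)))
  else
    w * INR d + h (Some (S d)).

(** In the empty state only the passive action is allowed.
    h is required to have at most linear growth in the age (the standard
    class in which the relative value function of this countable-state MDP
    lives; without a growth condition the ACOE has spurious solutions). *)
Definition avg_cost_opt (w p q lam g : R) (h : state -> R) : Prop :=
  g + h None = (1 - p) * h None + p * h (Some 0%nat) /\
  (forall d : nat,
     g + h (Some d) = Rmin (Vbar w p q lam h d false) (Vbar w p q lam h d true)) /\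
  (exists C : R, forall d : nat, Rabs (h (Some d)) <= C * (1 + INR d)).

Definition passive_set (w p q lam : R) (h : state -> R) (s : state) : Prop :=
  match s with
  | None => True
  | Some d => Vbar w p q lam h d false <= Vbar w p q lam h d true
  end.

(** Indexability of a single user: the relative value function exists for every
    activation cost lam >= 0, the passive set is monotone non-decreasing in lam,
    and P(infinity) = S (every state is passive for all large enough lam). *)
Definition user_indexable (w p q : R) : Prop :=
  (forall lam, 0 <= lam -> exists g h, avg_cost_opt w p q lam g h) /\
  (forall lam1 lam2 g1 g2 (h1 h2 : state -> R),
     0 <= lam1 -> lam1 <= lam2 ->
     avg_cost_opt w p q lam1 g1 h1 -> avg_cost_opt w p q lam2 g2 h2 ->
     forall s, passive_set w p q lam1 h1 s -> passive_set w p q lam2 h2 s) /\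
  (forall s : state, exists L : R, forall lam g (h : state -> R),
     L <= lam -> avg_cost_opt w p q lam g h -> passive_set w p q lam h s).

Definition problem_indexable (N : nat) (M : nat -> nat)
  (w p : nat -> nat -> R) (q : nat -> R) : Prop :=
  forall i j, (i < N)%nat -> (j < M i)%nat -> user_indexable (w i j) (p i j) (q i).

(* Main.v *)
Require Import Defs.
From Stdlib Require Import Reals Lra Lia Psatz.
Open Scope R_scope.


Lemma rmin_shift u v K : Rmin (u + K) (v + K) = Rmin u v + K.
Proof. unfold Rmin; repeat destruct Rle_dec; lra. Qed.

Lemma rmin_pos q x : 0 < q <= 1 -> 0 <= x -> Rmin x ((1-q)*x) = (1-q)*x.
Proof. intros Hq Hx. apply Rmin_right. nra. Qed.

Lemma rmin_neg q x : 0 < q <= 1 -> x <= 0 -> Rmin x ((1-q)*x) = x.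
Proof. intros Hq Hx. apply Rmin_left. nra. Qed.

Lemma rmin_mono q x y : 0 < q <= 1 -> x <= y -> Rmin x ((1-q)*x) <= Rmin y ((1-q)*y).
Proof.
  intros Hq Hxy. apply Rmin_glb.
  - eapply Rle_trans; [apply Rmin_l|lra].
  - eapply Rle_trans; [apply Rmin_r|nra].
Qed.

Lemma SL (x : nat -> R) eps beta a b : 0 < eps ->
  (forall n, x n + eps * INR n + beta <= x (S n)) ->
  (forall n, x n <= a + b * INR n) -> False.
Proof.
  intros He Hs Hb.
  assert (H : forall n, x 0%nat + beta * INR n + eps * INR n * (INR n - 1) / 2 <= x n).
  { induction n as [|n IH].
    - simpl. lra.
    - rewrite S_INR. specialize (Hs n).
      assert (E: eps * (INR n + 1) * (INR n + 1 - 1) / 2 = eps * INR n * (INR n - 1) / 2 + eps * INR n) by field.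
      lra. }
  set (K := Rabs b + Rabs beta + 1).
  destruct (INR_unbounded (2 * K / eps + 1 + Rabs a + Rabs (x 0%nat))) as [n Hn].
  set (t := INR n) in *.
  assert (Kp : 0 < K) by (unfold K; pose proof (Rabs_pos b); pose proof (Rabs_pos beta); lra).
  assert (H2K : 0 <= 2 * K / eps) by (unfold Rdiv; apply Rmult_le_pos; [lra| left; apply Rinv_0_lt_compat; lra]).
  assert (Hy : eps * (t - 1) >= 2 * K).
  { assert (eps * (2 * K / eps) = 2 * K) by (field; lra).
    assert (eps * (t - 1) >= eps * (2 * K / eps)).
    { apply Rle_ge, Rmult_le_compat_l. lra. pose proof (Rabs_pos a). pose proof (Rabs_pos (x 0%nat)). lra. }
    lra. }
  assert (Hb1 : b <= Rabs b) by apply Rle_abs.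
  assert (Hb2 : - beta <= Rabs beta) by (rewrite <- Rabs_Ropp; apply Rle_abs).
  assert (Ha : a <= Rabs a) by apply Rle_abs.
  assert (Hx0 : - x 0%nat <= Rabs (x 0%nat)) by (rewrite <- Rabs_Ropp; apply Rle_abs).
  assert (Hz : eps * (t - 1) / 2 + beta - b >= 1) by (unfold K in *; lra).
  assert (Ht : 0 <= t) by apply pos_INR.
  assert (t * (eps * (t - 1) / 2 + beta - b) >= t * 1).
  { apply Rle_ge, Rmult_le_compat_l; lra. }
  specialize (H n). specialize (Hb n). fold t in H, Hb.
  assert (E : x 0%nat + beta * t + eps * t * (t - 1) / 2 - (a + b * t)
           = t * (eps * (t - 1) / 2 + beta - b) + x 0%nat - a) by field.
  pose proof (Rabs_pos a). pose proof (Rabs_pos (x 0%nat)).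
  lra.
Qed.

Lemma EXPL (x : nat -> R) c a b : 0 <= c < 1 -> 0 < x 0%nat ->
  (forall n, x n <= c * x (S n)) -> (forall n, x n <= a + b * INR n) -> False.
Proof.
  intros Hc H0 Hs Hb.
  assert (Hp : forall n, 0 < x n).
  { induction n as [|n IH]; auto. specialize (Hs n).
    destruct (Rle_lt_dec (x (S n)) 0) as [Hn|Hn]; auto.
    assert (c * x (S n) <= 0) by (pose proof (Rmult_le_compat_l c (x (S n)) 0); lra). lra. }
  assert (Hi : forall n, x n + (1 - c) * x n <= x (S n)).
  { intro n. specialize (Hs n). pose proof (Hp (S n)). pose proof (Hp n).
    assert (c * x (S n) <= x (S n)) by (pose proof (Rmult_le_compat_r (x (S n)) c 1); lra).
    assert ((1 - c) * x n <= (1 - c) * x (S n)) by (apply Rmult_le_compat_l; lra).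
    lra. }
  assert (Hl : forall n, x 0%nat * (1 + INR n * (1 - c)) <= x n).
  { induction n as [|n IH].
    - simpl. lra.
    - rewrite S_INR. specialize (Hi n).
      assert (0 <= x 0%nat * INR n * (1 - c) * (1 - c)).
      { pose proof (pos_INR n). repeat apply Rmult_le_pos; lra. }
      nra. }
  apply (SL x ((1 - c) * (1 - c) * x 0%nat) ((1 - c) * x 0%nat) a b).
  - assert (0 < (1-c)*(1-c)) by nra. nra.
  - intro n. specialize (Hi n). specialize (Hl n). nra.
  - exact Hb.
Qed.

Definition zsol (w q g : R) (z : nat -> R) : Prop :=
  forall d, g + z d = w * INR d + Rmin (z (S d)) ((1 - q) * z (S d)).
Definition zbnd (z : nat -> R) : Prop :=
  exists a b, forall d, Rabs (z d) <= a + b * INR d.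

Lemma L1 w q g z : 0 < w -> 0 < q <= 1 -> zsol w q g z -> zbnd z ->
  forall k, g < w * INR k -> 0 < z k.
Proof.
  intros Hw Hq Hs [a [b Hb]] k Hk.
  destruct (Rle_lt_dec (z k) 0) as [H0|H0]; [exfalso|exact H0].
  assert (Hn : forall n, z (k + n)%nat <= 0).
  { induction n as [|n IH].
    - rewrite Nat.add_0_r; exact H0.
    - rewrite Nat.add_succ_r.
      destruct (Rle_lt_dec (z (S (k + n))) 0) as [H1|H1]; [exact H1|exfalso].
      specialize (Hs (k + n)%nat). rewrite rmin_pos in Hs by (auto; lra).
      rewrite plus_INR in Hs. pose proof (pos_INR n).
      assert (0 <= (1 - q) * z (S (k + n))) by (apply Rmult_le_pos; lra).
      assert (w * INR n >= 0) by (apply Rle_ge, Rmult_le_pos; lra).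
      nra. }
  apply (SL (fun n => - z (k + n)%nat) w (w * INR k - g) (a + b * INR k) b Hw).
  - intro n. rewrite Nat.add_succ_r. specialize (Hs (k + n)%nat).
    specialize (Hn (S n)). rewrite Nat.add_succ_r in Hn.
    rewrite rmin_neg in Hs by auto. rewrite plus_INR in Hs. lra.
  - intro n. specialize (Hb (k + n)%nat). rewrite plus_INR in Hb.
    pose proof (Rle_abs (- z (k+n)%nat)). rewrite Rabs_Ropp in H. lra.
Qed.

Lemma nat_big r : exists n : nat, r < INR n.
Proof. destruct (INR_unbounded r) as [n Hn]; exists n; lra. Qed.

Lemma L2 w q g g' z z' : 0 < w -> 0 < q <= 1 ->
  zsol w q g z -> zbnd z -> zsol w q g' z' -> zbnd z' -> g <= g' ->
  forall d, z' d <= z d.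
Proof.
  intros Hw Hq Hs Hb Hs' Hb' Hg d0.
  destruct (Rle_lt_dec (z' d0) (z d0)) as [H|H]; [exact H|exfalso].
  assert (Hn : forall n, z (d0 + n)%nat < z' (d0 + n)%nat).
  { induction n as [|n IH].
    - rewrite Nat.add_0_r; exact H.
    - rewrite Nat.add_succ_r.
      destruct (Rle_lt_dec (z' (S (d0 + n))) (z (S (d0 + n)))) as [H1|H1]; [exfalso|exact H1].
      pose proof (rmin_mono q _ _ Hq H1).
      pose proof (Hs (d0 + n)%nat). pose proof (Hs' (d0 + n)%nat). lra. }
  destruct (nat_big (g / w)) as [k0 Hk0].
  assert (Hgk : g < w * INR k0).
  { apply (Rmult_lt_compat_l w) in Hk0; [|lra].
    replace (w * (g / w)) with g in Hk0 by (field; lra). exact Hk0. }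
  set (K := (d0 + k0)%nat).
  assert (Hpos : forall n, 0 < z (K + n)%nat).
  { intro n. apply (L1 w q g z Hw Hq Hs Hb).
    unfold K. rewrite !plus_INR. pose proof (pos_INR d0). pose proof (pos_INR n).
    assert (0 <= w * INR d0) by (apply Rmult_le_pos; lra).
    assert (0 <= w * INR n) by (apply Rmult_le_pos; lra). nra. }
  assert (HnK : forall n, z (K + n)%nat < z' (K + n)%nat).
  { intro n. unfold K. rewrite <- Nat.add_assoc. apply Hn. }
  destruct Hb as [a [b Hb]]. destruct Hb' as [a' [b' Hb']].
  apply (EXPL (fun n => z' (K + n)%nat - z (K + n)%nat) (1 - q)
           (a + a' + (b + b') * INR K) (b + b')).
  - lra.
  - simpl. specialize (HnK 0%nat). lra.
  - intro n. simpl. rewrite Nat.add_succ_r.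
    pose proof (Hs (K + n)%nat) as E. pose proof (Hs' (K + n)%nat) as E'.
    pose proof (Hpos (S n)) as P. pose proof (HnK (S n)) as P'.
    rewrite Nat.add_succ_r in P, P'.
    rewrite rmin_pos in E by (auto; lra). rewrite rmin_pos in E' by (auto; lra).
    lra.
  - intro n. specialize (Hb (K + n)%nat). specialize (Hb' (K + n)%nat).
    rewrite plus_INR in Hb, Hb'.
    pose proof (Rle_abs (z' (K + n)%nat)).
    pose proof (Rle_abs (- z (K + n)%nat)). rewrite Rabs_Ropp in H1. lra.
Qed.

Lemma mnp a b : a <= 0 -> 0 <= b -> a * b <= 0.
Proof. intros; nra. Qed.
Lemma mpn a b : 0 <= a -> b <= 0 -> a * b <= 0.
Proof. intros; nra. Qed.

Definition cT (w q g : R) (d : nat) : R := (w * INR d - g) / q + w * (1 - q) / (q * q).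
Definition Pf (w q g : R) (T d : nat) : R :=
  cT w q g T + w * (INR T * (INR T - 1) - INR d * (INR d - 1)) / 2 - (INR T - INR d) * g.
Definition Zexp (w q g : R) (T d : nat) : R :=
  if (T <=? d)%nat then cT w q g d else Pf w q g T d.

Lemma Zexp_le w q g T d : (d <= T)%nat -> Zexp w q g T d = Pf w q g T d.
Proof.
  intro H. unfold Zexp. destruct (Nat.leb_spec T d).
  - assert (d = T) by lia. subst. unfold Pf. field.
  - reflexivity.
Qed.

Lemma Zexp_sol w q g T : 0 < w -> 0 < q <= 1 ->
  (T = 0%nat \/ w * (INR T - 1) + w / q <= g) -> g < w * INR T + w / q ->
  zsol w q g (Zexp w q g T).
Proof.
  intros Hw Hq HT Hg d.
  assert (Hwq : w <= w / q).
  { apply (Rmult_le_reg_l q); [lra|]. replace (q * (w / q)) with w by (field; lra). nra. }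
  destruct (Nat.leb_spec T d) as [Hd|Hd].
  - unfold Zexp. destruct (Nat.leb_spec T d); [|lia].
    destruct (Nat.leb_spec T (S d)); [|lia].
    assert (Hc : 0 <= cT w q g (S d)).
    { unfold cT. rewrite S_INR.
      replace ((w * (INR d + 1) - g) / q + w * (1 - q) / (q * q))
        with ((w * INR d + w / q - g) / q) by (field; lra).
      apply (le_INR) in Hd.
      assert (w * INR T <= w * INR d) by (apply Rmult_le_compat_l; lra).
      unfold Rdiv. apply Rmult_le_pos; [lra|]. left; apply Rinv_0_lt_compat; lra. }
    rewrite rmin_pos by auto. unfold cT. rewrite S_INR. field. lra.
  - assert (HT1 : w * (INR T - 1) + w / q <= g) by (destruct HT; [lia|auto]).
    rewrite (Zexp_le w q g T d) by lia. rewrite (Zexp_le w q g T (S d)) by lia.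
    assert (Hle : Pf w q g T (S d) <= 0).
    { unfold Pf.
      assert (HcT : cT w q g T <= 0).
      { unfold cT.
        replace ((w * INR T - g) / q + w * (1 - q) / (q * q))
          with ((w * (INR T - 1) + w / q - g) / q) by (field; lra).
        unfold Rdiv. apply mnp; [lra|]. left; apply Rinv_0_lt_compat; lra. }
      assert (Hd' : (S d <= T)%nat) by lia. apply le_INR in Hd'. rewrite S_INR in *. pose proof (pos_INR d).
      set (t := INR T) in *. set (x := INR d) in *.
      assert (E : w * (t * (t - 1) - (x + 1) * (x + 1 - 1)) / 2 - (t - (x + 1)) * g
                 = (t - (x + 1)) * (w * (t + x) / 2 - g)) by field.
      assert (0 <= w * (t - (x + 1))) by (apply Rmult_le_pos; lra).
      assert (w * (t + x) / 2 <= g) by lra.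
      assert ((t - (x + 1)) * (w * (t + x) / 2 - g) <= 0) by (apply mpn; lra).
      lra. }
    rewrite rmin_neg by auto. unfold Pf. rewrite S_INR. field.
Qed.

Lemma Zexp_bnd w q g T : 0 < w -> 0 < q <= 1 -> zbnd (Zexp w q g T).
Proof.
  intros Hw Hq.
  set (iq := / q). assert (Hiq : 0 < iq) by (apply Rinv_0_lt_compat; lra).
  set (K := w * (1 - q) / (q * q)).
  assert (HK : 0 <= K).
  { unfold K, Rdiv. apply Rmult_le_pos; [nra|]. left; apply Rinv_0_lt_compat; nra. }
  set (t := INR T). assert (Ht : 0 <= t) by apply pos_INR.
  pose proof (Rabs_pos g) as Hg0. pose proof (Rabs_pos (cT w q g T)) as Hc0.
  pose proof (Rle_abs g) as Hg1. pose proof (Rle_abs (-g)) as Hg2. rewrite Rabs_Ropp in Hg2.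
  exists (Rabs (cT w q g T) + 2 * w * t * t + t * Rabs g + Rabs g * iq + K), (w * iq).
  set (cTT := cT w q g T) in *.
  intro d. set (x := INR d). assert (Hx : 0 <= x) by apply pos_INR.
  assert (Hwx : 0 <= w * iq * x) by (repeat apply Rmult_le_pos; lra).
  assert (0 <= t * Rabs g) by (apply Rmult_le_pos; lra).
  assert (0 <= Rabs g * iq) by (apply Rmult_le_pos; lra).
  assert (0 <= w * t * t) by (repeat apply Rmult_le_pos; lra).
  unfold Zexp. destruct (Nat.leb_spec T d) as [Hd|Hd].
  - unfold cT. fold x K.
    replace ((w * x - g) / q) with (w * iq * x - g * iq) by (unfold iq; field; lra).
    assert (g * iq <= Rabs g * iq) by (apply Rmult_le_compat_r; lra).
    assert (- g * iq <= Rabs g * iq) by (apply Rmult_le_compat_r; lra).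
    apply Rabs_le. split; lra.
  - unfold Pf. fold t x cTT.
    assert (Hd' : (S d <= T)%nat) by lia. apply le_INR in Hd'. rewrite S_INR in Hd'. fold x t in Hd'.
    assert (EM : w * (t * (t - 1) - x * (x - 1)) / 2 = w * ((t - x) * (t + x - 1)) / 2) by field.
    rewrite EM.
    assert (M1 : 0 <= (t - x) * (t + x - 1)) by (apply Rmult_le_pos; lra).
    assert (M2 : (t - x) * (t + x - 1) <= t * (2 * t)).
    { apply Rmult_le_compat; lra. }
    assert (M3 : w * ((t - x) * (t + x - 1)) <= w * (t * (2 * t))) by (apply Rmult_le_compat_l; lra).
    assert (M4 : 0 <= w * ((t - x) * (t + x - 1))) by (apply Rmult_le_pos; lra).
    assert (G1 : (t - x) * g <= t * Rabs g).
    { apply Rle_trans with ((t - x) * Rabs g). apply Rmult_le_compat_l; lra.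
      apply Rmult_le_compat_r; lra. }
    assert (G2 : - ((t - x) * g) <= t * Rabs g).
    { apply Rle_trans with ((t - x) * Rabs g).
      replace (- ((t - x) * g)) with ((t - x) * - g) by ring. apply Rmult_le_compat_l; lra.
      apply Rmult_le_compat_r; lra. }
    pose proof (Rle_abs cTT). pose proof (Rle_abs (- cTT)). rewrite Rabs_Ropp in H3.
    apply Rabs_le. split; nra.
Qed.

Definition Ah (p : R) (h : state -> R) := p * h (Some 0%nat) + (1 - p) * h None.
Definition zof (p q lam : R) (h : state -> R) (d : nat) := h (Some d) - Ah p h - lam / q.

Lemma vbar_f w p q lam h d : 0 < q ->
  Vbar w p q lam h d false = zof p q lam h (S d) + (w * INR d + (Ah p h + lam / q)).
Proof. intros; unfold Vbar, zof, Ah; field; lra. Qed.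

Lemma vbar_t w p q lam h d : 0 < q ->
  Vbar w p q lam h d true = (1 - q) * zof p q lam h (S d) + (w * INR d + (Ah p h + lam / q)).
Proof. intros; unfold Vbar, zof, Ah; field; lra. Qed.

Lemma passive_iff w p q lam h d : 0 < q ->
  passive_set w p q lam h (Some d) <-> zof p q lam h (S d) <= 0.
Proof.
  intros Hq. unfold passive_set. rewrite vbar_f, vbar_t by lra. split; intro; nra.
Qed.

Lemma acoe_z w p q lam g h : 0 < p <= 1 -> 0 < q <= 1 -> avg_cost_opt w p q lam g h ->
  zsol w q g (zof p q lam h) /\ zbnd (zof p q lam h) /\
  p * q * zof p q lam h 0%nat + p * lam = (1 - p) * q * g.
Proof.
  intros Hp Hq [HE [Hd [C HC]]]. split; [|split].
  - intro d. specialize (Hd d). rewrite vbar_f, vbar_t, rmin_shift in Hd by lra.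
    unfold zof at 1. lra.
  - exists (C + Rabs (Ah p h + lam / q)), C. intro d.
    unfold zof. specialize (HC d).
    replace (h (Some d) - Ah p h - lam / q) with (h (Some d) + - (Ah p h + lam / q)) by ring.
    eapply Rle_trans; [apply Rabs_triang|]. rewrite Rabs_Ropp. lra.
  - unfold zof, Ah.
    replace (p * q * (h (Some 0%nat) - (p * h (Some 0%nat) + (1 - p) * h None) - lam / q) + p * lam)
      with (q * (1 - p) * (p * (h (Some 0%nat) - h None))) by (field; lra).
    replace (p * (h (Some 0%nat) - h None)) with g by lra. ring.
Qed.

Lemma z_acoe w p q lam g h : 0 < q <= 1 -> zsol w q g (zof p q lam h) ->
  forall d, g + h (Some d) = Rmin (Vbar w p q lam h d false) (Vbar w p q lam h d true).
Proof.
  intros Hq Hs d. rewrite vbar_f, vbar_t, rmin_shift by lra.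
  specialize (Hs d). unfold zof at 1 in Hs. lra.
Qed.

Lemma part_mono w p q : 0 < w -> 0 < p <= 1 -> 0 < q <= 1 ->
  forall lam1 lam2 g1 g2 (h1 h2 : state -> R),
     0 <= lam1 -> lam1 <= lam2 ->
     avg_cost_opt w p q lam1 g1 h1 -> avg_cost_opt w p q lam2 g2 h2 ->
     forall s, passive_set w p q lam1 h1 s -> passive_set w p q lam2 h2 s.
Proof.
  intros Hw Hp Hq lam1 lam2 g1 g2 h1 h2 _ Hl A1 A2 [d|] Hs; [|exact I].
  rewrite passive_iff in * by lra.
  destruct (acoe_z w p q lam1 g1 h1 Hp Hq A1) as [S1 [B1 R1]].
  destruct (acoe_z w p q lam2 g2 h2 Hp Hq A2) as [S2 [B2 R2]].
  set (z1 := zof p q lam1 h1) in *. set (z2 := zof p q lam2 h2) in *.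
  assert (Hg : g1 <= g2).
  { destruct (Rle_lt_dec g1 g2) as [H|H]; [exact H|exfalso].
    pose proof (L2 w q g2 g1 z2 z1 Hw Hq S2 B2 S1 B1 (Rlt_le _ _ H)) as Hc.
    pose proof (rmin_mono q _ _ Hq (Hc 1%nat)).
    pose proof (S1 0%nat). pose proof (S2 0%nat).
    assert (Z : z1 0%nat < z2 0%nat) by lra.
    assert (0 <= (1 - p) * q * (g1 - g2)) by (apply Rmult_le_pos; [apply Rmult_le_pos|]; lra).
    assert (0 < p * q * (z2 0%nat - z1 0%nat)) by (apply Rmult_lt_0_compat; [apply Rmult_lt_0_compat|]; lra).
    assert (0 < p * (lam1 - lam2)) by lra.
    nra. }
  pose proof (L2 w q g1 g2 z1 z2 Hw Hq S1 B1 S2 B2 Hg (S d)). lra.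
Qed.

Lemma cT_zero w q d : 0 < q -> cT w q (w * INR d + w / q) (S d) = 0.
Proof. intros. unfold cT. rewrite S_INR. field. lra. Qed.

Lemma part_inf w p q : 0 < w -> 0 < p <= 1 -> 0 < q <= 1 ->
  forall s : state, exists L : R, forall lam g (h : state -> R),
     L <= lam -> avg_cost_opt w p q lam g h -> passive_set w p q lam h s.
Proof.
  intros Hw Hp Hq [d|]; [|exists 0; intros; exact I].
  set (G := w * INR d + w / q).
  set (Z := Zexp w q G (S d)).
  assert (SZ : zsol w q G Z).
  { apply Zexp_sol; auto.
    - right. rewrite S_INR. unfold G. lra.
    - rewrite S_INR. unfold G. lra. }
  pose proof (Zexp_bnd w q G (S d) Hw Hq) as BZ. fold Z in BZ.
  exists (((1 - p) * q * G - p * q * Z 0%nat) / p + 1).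
  intros lam g h HL Ha. rewrite passive_iff by lra.
  destruct (acoe_z w p q lam g h Hp Hq Ha) as [S1 [B1 R1]].
  set (z := zof p q lam h) in *.
  destruct (Rle_lt_dec (z (S d)) 0) as [H|H]; [exact H|exfalso].
  assert (Hg : g < G).
  { destruct (Rle_lt_dec G g) as [H1|H1]; [exfalso|exact H1].
    pose proof (L2 w q G g Z z Hw Hq SZ BZ S1 B1 H1 (S d)) as Hc.
    unfold Z, Zexp in Hc. rewrite Nat.leb_refl in Hc. unfold G in Hc. rewrite cT_zero in Hc by lra. lra. }
  pose proof (L2 w q g G z Z Hw Hq S1 B1 SZ BZ (Rlt_le _ _ Hg) 0%nat) as Hc.
  assert (0 <= (1 - p) * q * (G - g)) by (apply Rmult_le_pos; [apply Rmult_le_pos|]; lra).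
  assert (0 <= p * q * (z 0%nat - Z 0%nat)) by (apply Rmult_le_pos; [apply Rmult_le_pos|]; lra).
  assert (E : ((1 - p) * q * G - p * q * Z 0%nat) / p * p = (1 - p) * q * G - p * q * Z 0%nat)
    by (field; lra).
  assert (p * lam <= (1 - p) * q * G - p * q * Z 0%nat) by lra.
  set (X := ((1 - p) * q * G - p * q * Z 0%nat) / p) in *.
  assert (p * (X + 1) <= p * lam) by (apply Rmult_le_compat_l; lra).
  lra.
Qed.

Definition kT (p q : R) (T : nat) := (1 - p) * q / p + 1 + q * INR T.
Definition LamT (w p q : R) (T : nat) (g : R) :=
  g * kT p q T - w * INR T - w * (1 - q) / q - q * w * INR T * (INR T - 1) / 2.
Definition bT w p q T := LamT w p q T (w * INR T + w / q).

Lemma kT_pos p q T : 0 < p <= 1 -> 0 < q <= 1 -> 0 < kT p q T.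
Proof.
  intros Hp Hq. unfold kT.
  assert (0 <= (1 - p) * q / p).
  { unfold Rdiv. apply Rmult_le_pos; [apply Rmult_le_pos; lra|]. left; apply Rinv_0_lt_compat; lra. }
  assert (0 <= q * INR T) by (apply Rmult_le_pos; [lra|apply pos_INR]).
  lra.
Qed.

Lemma bT_step w p q T : 0 < q -> 0 < p ->
  LamT w p q (S T) (w * INR T + w / q) = bT w p q T.
Proof. intros. unfold bT, LamT, kT. rewrite S_INR. field. lra. Qed.

Lemma bT_big w p q T : 0 < w -> 0 < p <= 1 -> 0 < q <= 1 -> w * INR T <= bT w p q T.
Proof.
  intros Hw Hp Hq. unfold bT, LamT, kT.
  set (t := INR T). assert (Ht : 0 <= t) by apply pos_INR.
  set (r := (1 - p) * q / p).
  assert (Hr : 0 <= r).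
  { unfold r, Rdiv. apply Rmult_le_pos; [apply Rmult_le_pos; lra|]. left; apply Rinv_0_lt_compat; lra. }
  assert (E : (w * t + w / q) * (r + 1 + q * t) - w * t - w * (1 - q) / q - q * w * t * (t - 1) / 2
              = (w * t + w / q) * r + w * t + q * w * t * t / 2 + q * w * t / 2 + w) by (field; lra).
  rewrite E.
  assert (0 <= w / q) by (unfold Rdiv; apply Rmult_le_pos; [lra|left; apply Rinv_0_lt_compat; lra]).
  assert (0 <= (w * t + w / q) * r) by (apply Rmult_le_pos; [|lra]; pose proof (Rmult_le_pos w t); lra).
  assert (0 <= q * w * t * t) by (repeat apply Rmult_le_pos; lra).
  assert (0 <= q * w * t) by (repeat apply Rmult_le_pos; lra).
  lra.
Qed.

Lemma search w p q lam : forall N, lam < bT w p q N ->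
  exists T, lam < bT w p q T /\ (T = 0%nat \/ exists T', T = S T' /\ bT w p q T' <= lam).
Proof.
  induction N as [|N IH]; intro H.
  - exists 0%nat; auto.
  - destruct (Rlt_le_dec lam (bT w p q N)) as [H1|H1]; [apply IH; exact H1|].
    exists (S N). split; auto. right. exists N. auto.
Qed.

Lemma part_exist w p q : 0 < w -> 0 < p <= 1 -> 0 < q <= 1 ->
  forall lam, 0 <= lam -> exists g h, avg_cost_opt w p q lam g h.
Proof.
  intros Hw Hp Hq lam _.
  destruct (nat_big (lam / w)) as [N HN].
  assert (HN' : lam < bT w p q N).
  { eapply Rlt_le_trans; [|apply bT_big; auto].
    apply (Rmult_lt_compat_l w) in HN; [|lra].
    replace (w * (lam / w)) with lam in HN by (field; lra). exact HN. }
  destruct (search w p q lam N HN') as [T [HT1 HT2]].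
  pose proof (kT_pos p q T Hp Hq) as Hk.
  set (g := (lam + w * INR T + w * (1 - q) / q + q * w * INR T * (INR T - 1) / 2) / kT p q T).
  assert (Hlam : LamT w p q T g = lam) by (unfold LamT, g; field; lra).
  assert (Hdiff : forall x y, LamT w p q T x - LamT w p q T y = (x - y) * kT p q T)
    by (intros; unfold LamT; ring).
  assert (Hgu : g < w * INR T + w / q).
  { destruct (Rlt_le_dec g (w * INR T + w / q)) as [H|H]; [exact H|exfalso].
    pose proof (Hdiff g (w * INR T + w / q)). fold (bT w p q T) in H0.
    assert (0 <= (g - (w * INR T + w / q)) * kT p q T) by (apply Rmult_le_pos; lra). lra. }
  assert (Hgl : T = 0%nat \/ w * (INR T - 1) + w / q <= g).
  { destruct HT2 as [H|[T' [-> HT']]]; [left; exact H|right].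
    rewrite <- bT_step in HT' by lra.
    rewrite S_INR. replace (INR T' + 1 - 1) with (INR T') by ring.
    destruct (Rle_lt_dec (w * INR T' + w / q) g) as [H|H]; [exact H|exfalso].
    pose proof (Hdiff (w * INR T' + w / q) g).
    assert (0 < (w * INR T' + w / q - g) * kT p q (S T')) by (apply Rmult_lt_0_compat; lra).
    lra. }
  pose proof (Zexp_sol w q g T Hw Hq Hgl Hgu) as SZ.
  destruct (Zexp_bnd w q g T Hw Hq) as [a [b Hb]].
  set (h := fun s : state => match s with
                             | None => Zexp w q g T 0 + lam / q - g / p
                             | Some d => Zexp w q g T d + lam / q end).
  assert (HA : Ah p h = 0).
  { unfold Ah, h. rewrite Zexp_le by lia. unfold Pf, cT. simpl INR.
    rewrite <- Hlam. unfold LamT, kT. field. lra. }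
  assert (Hz : forall d, zof p q lam h d = Zexp w q g T d).
  { intro d. unfold zof. rewrite HA. unfold h. ring. }
  exists g, h. split; [|split].
  - unfold h. field. lra.
  - apply z_acoe; auto. intro d. rewrite !Hz. apply SZ.
  - exists (Rabs a + Rabs b + Rabs (lam / q)). intro d. unfold h.
    eapply Rle_trans; [apply Rabs_triang|].
    specialize (Hb d). pose proof (pos_INR d).
    pose proof (Rle_abs a). pose proof (Rle_abs b). pose proof (Rabs_pos (lam / q)).
    assert (b * INR d <= Rabs b * INR d) by (apply Rmult_le_compat_r; lra).
    assert (0 <= Rabs a * INR d) by (apply Rmult_le_pos; [apply Rabs_pos|lra]).
    assert (0 <= Rabs (lam / q) * INR d) by (apply Rmult_le_pos; lra).
    pose proof (Rabs_pos b). lra.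
Qed.

Theorem theorem1 (N : nat) (M : nat -> nat) (w p : nat -> nat -> R) (q : nat -> R)
  (Hw : forall i j, (i < N)%nat -> (j < M i)%nat -> 0 < w i j)
  (Hp : forall i j, (i < N)%nat -> (j < M i)%nat -> 0 < p i j <= 1)
  (Hq : forall i, (i < N)%nat -> 0 < q i <= 1) :
  problem_indexable N M w p q.
Proof.
  intros i j Hi Hj.
  pose proof (Hw i j Hi Hj). pose proof (Hp i j Hi Hj). pose proof (Hq i Hi).
  split; [|split].
  - apply part_exist; auto.
  - apply part_mono; auto.
  - apply part_inf; auto.
Qed.
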